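(* Let $r\in\{1,\infty\}$, $N\in\{0,2,3,\ldots\}$, and let $p$ be the value of $\mathbb{G}_r(N)$. Let $K$ be a closed subgroup of $\mathbb{G}_r(N)$ which is bounded (in the metric $(x,y)\mapsto p(x-y)$) and such that for every finite group $H$ and every value $q$ on $K\times H$ with $(K\times H,+,q)\in\mathfrak{G}_r(N)$ and $q(x,0)=p(x)$ for $x\in K$, there is an isometric group homomorphism $\psi\colon K\times H\to\mathbb{G}_r(N)$ with $\psi(x,0)=x$ for all $x\in K$. Then $K$ is compact.
   Context: All groups are Abelian. A value on $G$ is $p\colon G\to[0,\infty)$ with $p(x)=0\iff x=0$, $p(-x)=p(x)$, $p(x+y)\leqslant p(x)+p(y)$. Class $\mathcal{O}_0$: $\lim_n p(na)/n=0$ for all $a$. $\mathfrak{G}_r(N)$: separable valued Abelian groups of class $\mathcal{O}_0$ with $p\leqslant r$ (vacuous if $r=\infty$) and of exponent $N$ if $N\neq0$. $\mathbb{G}_r(N)$ is the valued Abelian group, unique up to isometric group isomorphism, which (G1) is complete and in $\mathfrak{G}_r(N)$; (G2) for every finite valued Abelian group $(H,+,q)$ (of exponent $N$ if $N\neq0$) with $q\leqslant r$, subgroup $K$, isometric homomorphism $\varphi\colon K\to\mathbb{G}_r(N)$ and $\varepsilon\in(0,1)$, there is a homomorphism $\varphi_\varepsilon\colon H\to\mathbb{G}_r(N)$ with $p(\varphi(x)-\varphi_\varepsilon(x))\leqslant\varepsilon$ on $K$ and $(1-\varepsilon)q\leqslant p\circ\varphi_\varepsilon\leqslant(1+\varepsilon)q$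 on $H$; (G3) if $N=0$, finite-order elements are dense. *)

(* Defs.v *)
From HB Require Import structures.
From mathcomp Require Import all_boot all_order all_algebra.
From mathcomp Require Import reals.
From Stdlib Require List.
Set Implicit Arguments. Unset Strict Implicit. Unset Printing Implicit Defensive.
Import Order.TTheory GRing.Theory Num.Theory.
Local Open Scope ring_scope.

Inductive radius := r_one | r_infty.

Section Valued.
Variable R : realType.

(* Everything is stated for a subgroup S of an ambient abelian group T,
   carrying a function v : T -> R (only its values on S matter). *)
Variables (T : zmodType).

Definition is_subgroup (S : T -> Prop) :=
  S 0 /\ (forall x y, S x -> S y -> S (x - y)).

Definition is_value (S : T -> Prop) (v : T -> R) :=
  [/\ (forall x, S x -> 0 <= v x),
      (forall x, S x -> (v x = 0 <-> x = 0)),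
      (forall x, S x -> v (- x) = v x) &
      (forall x y, S x -> S y -> v (x + y) <= v x + v y)].

Definition class_O0 (S : T -> Prop) (v : T -> R) :=
  forall a, S a -> forall eps : R, 0 < eps ->
    exists n0 : nat, forall n : nat, (n0 <= n)%N ->
      `| v (a *+ n) / n%:R - 0 | < eps.

Definition separable (S : T -> Prop) (v : T -> R) :=
  exists s : nat -> T, (forall n, S (s n)) /\
    (forall x, S x -> forall eps : R, 0 < eps -> exists n, v (x - s n) < eps).

Definition bounded_by (r : radius) (S : T -> Prop) (v : T -> R) :=
  match r with
  | r_one => forall x, S x -> v x <= 1
  | r_infty => True
  end.

Definition has_exponent (N : nat) (S : T -> Prop) :=
  N <> 0%N -> forall x, S x -> x *+ N = 0.

Definition in_frakG (r : radius) (N : nat) (S : T -> Prop) (v : T -> R) :=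
  [/\ is_subgroup S, is_value S v, separable S v, class_O0 S v &
      bounded_by r S v /\ has_exponent N S].

Definition complete (S : T -> Prop) (v : T -> R) :=
  forall s : nat -> T, (forall n, S (s n)) ->
    (forall eps : R, 0 < eps -> exists n0 : nat, forall m n : nat,
       (n0 <= m)%N -> (n0 <= n)%N -> v (s m - s n) < eps) ->
    exists l, S l /\ (forall eps : R, 0 < eps -> exists n0 : nat,
       forall n : nat, (n0 <= n)%N -> v (s n - l) < eps).

Definition open_set (v : T -> R) (U : T -> Prop) :=
  forall x, U x -> exists eps : R, 0 < eps /\ (forall y, v (y - x) < eps -> U y).

Definition closed_set (v : T -> R) (A : T -> Prop) :=
  open_set v (fun x => ~ A x).

Definition metric_bounded (v : T -> R) (A : T -> Prop) :=
  exists M : R, forall x y, A x -> A y -> v (x - y) <= M.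

Definition compact_set (v : T -> R) (A : T -> Prop) :=
  forall (I : Type) (U : I -> T -> Prop),
    (forall i, open_set v (U i)) ->
    (forall x, A x -> exists i, U i x) ->
    exists s : list I, forall x, A x -> exists i, List.In i s /\ U i x.

End Valued.

Definition full {T : Type} : T -> Prop := fun _ => True.

(* (G, +, p) is (an isometric copy of) G_r(N): properties (G1), (G2), (G3). *)
Definition is_universal_G (R : realType) (r : radius) (N : nat)
    (G : zmodType) (p : G -> R) :=
  [/\
   in_frakG r N full p /\ complete full p,
   (forall (H : finZmodType) (q : H -> R) (K : H -> Prop) (phi : H -> G)
      (eps : R),
      is_value full q -> bounded_by r full q -> has_exponent N (@full H) ->
      is_subgroup K ->
      (forall x y, K x -> K y -> phi (x + y) = phi x + phi y) ->
      (forall x, K x -> p (phi x) = q x) ->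
      0 < eps < 1 ->
      exists phie : H -> G,
        [/\ (forall x y, phie (x + y) = phie x + phie y),
            (forall x, K x -> p (phi x - phie x) <= eps) &
            (forall x, (1 - eps) * q x <= p (phie x) <= (1 + eps) * q x)]) &
   (N = 0%N -> forall x (eps : R), 0 < eps ->
      exists y, (exists n : nat, (0 < n)%N /\ y *+ n = 0) /\ p (x - y) < eps)].

(* Main.v *)
Require Import Defs.
From HB Require Import structures.
From mathcomp Require Import all_boot all_order all_algebra.
From mathcomp Require Import reals boolp classical_sets.
From mathcomp Require Import ring lra.
Import Order.TTheory GRing.Theory Num.Theory.
Local Open Scope ring_scope.
Set Implicit Arguments. Unset Strict Implicit.

Lemma pv_ge0 (R : realType) (G : zmodType) (p : G -> R) :
  is_value full p -> forall x, 0 <= p x.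
Proof. by case=> h _ _ _ x; apply: h. Qed.

Lemma pv_0 (R : realType) (G : zmodType) (p : G -> R) :
  is_value full p -> p 0 = 0.
Proof. by case=> _ h _ _; apply/(h 0 I). Qed.

Lemma pv_N (R : realType) (G : zmodType) (p : G -> R) :
  is_value full p -> forall x, p (- x) = p x.
Proof. by case=> _ _ h _ x; apply: h. Qed.

Lemma pv_D (R : realType) (G : zmodType) (p : G -> R) :
  is_value full p -> forall x y, p (x + y) <= p x + p y.
Proof. by case=> _ _ _ h x y; apply: h. Qed.

Lemma pv_sym (R : realType) (G : zmodType) (p : G -> R) :
  is_value full p -> forall x y, p (x - y) = p (y - x).
Proof. by move=> hv x y; rewrite -opprB pv_N. Qed.

Lemma pv_tri (R : realType) (G : zmodType) (p : G -> R) :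
  is_value full p -> forall x y z, p (x - z) <= p (x - y) + p (y - z).
Proof.
move=> hv x y z; have -> : x - z = (x - y) + (y - z) by rewrite addrA subrK.
exact: pv_D.
Qed.

Lemma arch_inv (R : realType) (t : R) : 0 < t -> exists k : nat, (k.+1%:R)^-1 < t.
Proof.
move=> t0; exists (Num.Def.archi_bound t^-1).
rewrite invf_plt ?posrE ?ltr0n //.
apply: (lt_le_trans (archi_boundP _)); first by rewrite invr_ge0 ltW.
by rewrite ler_nat.
Qed.

Lemma inv_pos (R : realType) (k : nat) : 0 < (k.+1%:R : R)^-1.
Proof. by rewrite invr_gt0 ltr0n. Qed.

Lemma inv_anti (R : realType) (k n : nat) : (k <= n)%N ->
  (n.+1%:R : R)^-1 <= (k.+1%:R)^-1.
Proof. by move=> h; rewrite lef_pV2 ?posrE ?ltr0n // ler_nat. Qed.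

Definition goodset (G : zmodType) (I : Type) (U : I -> G -> Prop) (K A : G -> Prop) :=
  exists s : list I, forall x, K x -> A x -> exists i, List.In i s /\ U i x.



Lemma good_union (R : realType) (G : zmodType) (p : G -> R) (I : Type)
  (U : I -> G -> Prop) (K A : G -> Prop) (eps : R) (L : list G) :
  (forall l, List.In l L -> goodset U K (fun x => A x /\ p (x - l) < eps)) ->
  goodset U K (fun x => A x /\ exists l, List.In l L /\ p (x - l) < eps).
Proof.
elim: L => [|l L IH] hL.
  by exists nil => x _ [_ [l [[]]]].
have [s1 hs1] := hL l (or_introl erefl).
have [s2 hs2] := IH (fun l' h => hL l' (or_intror h)).
exists (s1 ++ s2) => x Kx [Ax [l' [[<-|hin] hl]]].
  have [i [hi Ui]] := hs1 x Kx (conj Ax hl).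
  by exists i; split => //; apply: List.in_or_app; left.
have [i [hi Ui]] := hs2 x Kx (conj Ax (ex_intro _ l' (conj hin hl))).
by exists i; split => //; apply: List.in_or_app; right.
Qed.

Lemma good_split (R : realType) (G : zmodType) (p : G -> R) (I : Type)
  (U : I -> G -> Prop) (K A : G -> Prop) (eps : R) :
  (exists L : list G, forall x, K x -> exists l, List.In l L /\ p (x - l) < eps) ->
  ~ goodset U K A -> exists z, ~ goodset U K (fun x => A x /\ p (x - z) < eps).
Proof.
move=> [L hL] hbad.
case: (pselect (exists z, ~ goodset U K (fun x => A x /\ p (x - z) < eps))) => // hn.
exfalso; apply: hbad.
have hall : forall l, List.In l L -> goodset U K (fun x => A x /\ p (x - l) < eps).
  move=> l _; case: (pselect (goodset U K (fun x => A x /\ p (x - l) < eps))) => // h.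
  by exfalso; apply: hn; exists l.
have [s hs] := @good_union _ _ p _ _ _ _ _ _ hall.
exists s => x Kx Ax; apply: hs => //; split => //; exact: hL.
Qed.

Lemma bad_ne (G : zmodType) (I : Type) (U : I -> G -> Prop) (K A : G -> Prop) :
  ~ goodset U K A -> exists x, K x /\ A x.
Proof.
move=> hb; case: (pselect (exists x, K x /\ A x)) => // hn.
by exfalso; apply: hb; exists nil => x Kx Ax; exfalso; apply: hn; exists x.
Qed.

Lemma tb_compact (R : realType) (G : zmodType) (p : G -> R) (K : G -> Prop) :
  is_value full p -> complete full p -> closed_set p K ->
  (forall eps : R, 0 < eps -> exists L : list G,
     forall x, K x -> exists l, List.In l L /\ p (x - l) < eps) ->
  compact_set p K.
Proof.
move=> hv hc hcl htb I U hU hcov.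
case: (pselect (goodset U K (fun _ => True))) => [[s hs]|hbad].
  by exists s => x Kx; apply: hs.
exfalso.
pose e (m : nat) : R := (m.+1%:R)^-1.
have ex : forall Am : (G -> Prop) * nat, exists z, ~ goodset U K Am.1 ->
    ~ goodset U K (fun x => Am.1 x /\ p (x - z) < e Am.2).
  move=> [A m]; case: (pselect (goodset U K A)) => [hg|hb]; first by exists 0.
  have [z hz] := @good_split _ _ _ _ _ _ _ _ (htb _ (inv_pos _ m)) hb; by exists z.
have [nz hnz] := choice ex.
pose Aseq := fix Aseq (m : nat) : G -> Prop := match m with
  | 0%N => (fun _ => True)
  | m'.+1 => (fun x => Aseq m' x /\ p (x - nz (Aseq m', m')) < e m') end.
have hAb : forall m, ~ goodset U K (Aseq m).
  elim => [|m IH] //=; exact: (hnz (Aseq m, m) IH).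
have exw : forall m, exists w, K w /\ Aseq m.+1 w by move=> m; apply: bad_ne.
have [w hw] := choice exw.
have Amono : forall k m x, Aseq (m + k)%N x -> Aseq m x.
  elim => [|k IH] m x; first by rewrite addn0.
  by rewrite addnS => -[h _]; apply: IH.
have hwk : forall k m, (k <= m)%N -> p (w m - nz (Aseq k, k)) < e k.
  move=> k m hkm; have := (hw m).2; rewrite -(subnKC hkm) -addSn => /Amono.
  by case.
have hcau : forall eps : R, 0 < eps -> exists n0 : nat, forall m n : nat,
    (n0 <= m)%N -> (n0 <= n)%N -> p (w m - w n) < eps.
  move=> eps eps0; have [k hk] := arch_inv (divr_gt0 eps0 (ltr0n R 2)).
  exists k => m n hm hn.
  have := pv_tri hv (w m) (nz (Aseq k, k)) (w n).
  rewrite (pv_sym hv (nz (Aseq k, k)) (w n)).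
  have := hwk k m hm; have := hwk k n hn; rewrite -/(e k) in hk; lra.
have [l [_ hl]] := hc w (fun _ => Logic.I) hcau.
have Kl : K l.
  case: (pselect (K l)) => // hnK; exfalso.
  have [eps [eps0 heps]] := hcl l hnK.
  have [n0 hn0] := hl eps eps0.
  exact: (heps (w n0) (hn0 n0 (leqnn _)) (hw n0).1).
have [i Ui] := hcov l Kl.
have [d [d0 hd]] := hU i l Ui.
have d30 : 0 < d / 3 by rewrite divr_gt0 // ltr0n.
have [k hk] := arch_inv d30.
have [n0 hn0] := hl _ d30.
pose m := maxn n0 k.
apply: (hAb k.+1); exists [:: i] => x Kx Ax; exists i; split; first by left.
apply: hd.
have h1 := pv_tri hv x (nz (Aseq k, k)) l.
have h2 := pv_tri hv (nz (Aseq k, k)) (w m) l.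
rewrite (pv_sym hv _ (w m)) in h2.
have h3 := hwk k m (leq_maxr _ _).
have h4 := hn0 m (leq_maxl _ _).
have h5 : p (x - nz (Aseq k, k)) < e k by case: Ax.
rewrite -/(e k) in hk; lra.
Qed.

Lemma sep_seq (R : realType) (G : zmodType) (p : G -> R) (K : G -> Prop) (eps : R) :
  is_value full p ->
  (forall L : list G, exists x, K x /\ forall l, List.In l L -> eps <= p (x - l)) ->
  exists xs : nat -> G, (forall i, K (xs i)) /\
    forall i j, i <> j -> eps <= p (xs i - xs j) /\ eps <= p (xs i + xs j).
Proof.
move=> hv hn; have [nxt hnxt] := choice hn.
pose P := fix P (n : nat) : list G := match n with
  | 0%N => nil
  | n'.+1 => nxt (P n') :: - nxt (P n') :: P n' end.
have inP : forall i j, (j < i)%N -> List.In (nxt (P j)) (P i) /\ List.In (- nxt (P j)) (P i).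
  elim => [|i IH] j //; rewrite ltnS leq_eqVlt => /orP [/eqP ->|hj] /=.
    by split; [left|right; left].
  by have [h1 h2] := IH j hj; split; right; right.
have hlt : forall i j, (j < i)%N -> eps <= p (nxt (P i) - nxt (P j)) /\
    eps <= p (nxt (P i) + nxt (P j)).
  move=> i j hji; have [h1 h2] := inP i j hji; split; first exact: (hnxt (P i)).2.
  by rewrite -[nxt (P j)]opprK; apply: (hnxt (P i)).2.
exists (fun n => nxt (P n)); split; first by move=> i; exact: (hnxt (P i)).1.
move=> i j hij; case: (ltngtP i j) => [hij'|hji|heq]; last by exfalso; apply: hij.
  by rewrite (pv_sym hv (nxt (P i))) (addrC (nxt (P i))); apply: hlt.
exact: hlt.
Qed.

Definition gsup (R : realType) (S : nat -> Prop) (f : nat -> R) : R :=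
  sup [set y | y = 0 \/ exists i, S i /\ y = f i].

Lemma gsup_ub (R : realType) (S : nat -> Prop) (f : nat -> R) (B : R) i :
  0 <= B -> (forall i, f i <= B) -> S i -> f i <= gsup S f.
Proof.
move=> B0 hB Si; apply: sup_upper_bound; last by right; exists i.
split; first by exists 0; left.
by exists B => y [->|[j [_ ->]]].
Qed.

Lemma gsup_ge0 (R : realType) (S : nat -> Prop) (f : nat -> R) (B : R) :
  0 <= B -> (forall i, f i <= B) -> 0 <= gsup S f.
Proof.
move=> B0 hB; apply: sup_upper_bound; last by left.
split; first by exists 0; left.
by exists B => y [->|[j [_ ->]]].
Qed.

Lemma gsup_le (R : realType) (S : nat -> Prop) (f : nat -> R) (u : R) :
  0 <= u -> (forall i, S i -> f i <= u) -> gsup S f <= u.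
Proof.
move=> u0 hu; apply: ge_sup; first by exists 0; left.
by move=> y [->|[j [Sj ->]]] //; apply: hu.
Qed.
Unset Implicit Arguments.

Lemma gt1 (n : nat) : n <> 0%N -> n <> 1%N -> (1 < n)%N.
Proof. by case: n => [|[|n]]. Qed.

Theorem proposition4p10 (R : realType) (r : radius) (N : nat)
    (G : zmodType) (p : G -> R) (K : G -> Prop) :
  N <> 1%N ->
  is_universal_G r N p ->
  is_subgroup K -> closed_set p K -> metric_bounded p K ->
  (forall (H : finZmodType) (q : G * H -> R),
     in_frakG r N (fun z : G * H => K z.1) q ->
     (forall x, K x -> q (x, 0) = p x) ->
     exists psi : G * H -> G,
       [/\ (forall z w, K z.1 -> K w.1 -> psi (z + w) = psi z + psi w),
           (forall z, K z.1 -> p (psi z) = q z) &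
           (forall x, K x -> psi (x, 0) = x)]) ->
  compact_set p K.
Proof.
move=> hN1 [[hGf hGc] _ _] hKs hcl [M hM] hyp.
case: hGf => _ hv [s [_ hs]] hO0 [hbd hexp].
apply: tb_compact => // eps eps0.
case: (pselect (exists L : list G, forall x, K x ->
   exists l, List.In l L /\ p (x - l) < eps)) => // hn; exfalso.
have hn' : forall L : list G, exists x, K x /\ forall l, List.In l L -> eps <= p (x - l).
  move=> L; case: (pselect (exists x, K x /\ forall l, List.In l L -> eps <= p (x - l))) => // h2.
  exfalso; apply: hn; exists L => x Kx.
  case: (pselect (exists l, List.In l L /\ p (x - l) < eps)) => // h3; exfalso.
  apply: h2; exists x; split => // l hl; rewrite leNgt; apply/negP => hlt.
  by apply: h3; exists l.
have [xs [Kxs hxs]] := sep_seq hv hn'.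
have [K0 KB] := hKs.
have KN : forall x, K x -> K (- x) by move=> x Kx; rewrite -sub0r; apply: KB.
have KD : forall x y, K x -> K y -> K (x + y).
  by move=> x y Kx Ky; rewrite -[y]opprK; apply: KB => //; apply: KN.
have pK : forall x, K x -> p x <= M by move=> x Kx; rewrite -[x]subr0; apply: hM.
have hge0 := pv_ge0 hv.
have [c [c0 [cK c1]]] : exists c : R, 0 < c /\ (forall x, K x -> p x <= c + c) /\
    (r = r_one -> c + c <= 1).
  case: (r) hbd => [hbd1|_].
    exists (1/2); split; first by lra.
    by split => [x _|_]; [have := hbd1 x Logic.I; lra | lra].
  exists ((`|M| + 1) / 2); split; first by have := normr_ge0 M; lra.
  split => // x Kx; have := pK x Kx; have := ler_norm M; lra.
pose beta := Num.min eps c.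
have beta0 : 0 < beta by rewrite lt_min eps0 c0.
have betae : beta <= eps by rewrite ge_min lexx.
have betac : beta <= c by rewrite ge_min lexx orbT.
pose d (i : nat) (x : G) := Num.min (p (x - xs i)) (p (x + xs i)).
pose b (i : nat) (x : G) := Num.max 0 (beta - d i x).
have hd0 : forall i x, 0 <= d i x by move=> i x; rewrite /d le_min !hge0.
have hb0 : forall i x, 0 <= b i x by move=> i x; rewrite /b le_max lexx.
have hbB : forall i x, b i x <= beta.
  by move=> i x; rewrite /b ge_max (ltW beta0) /=; have := hd0 i x; lra.
have hbself : forall i, b i (xs i) = beta.
  move=> i; rewrite /b; have -> : d i (xs i) = 0.
    by apply/le_anti; rewrite /d ge_min subrr pv_0 // lexx le_min lexx hge0.
  by apply/le_anti; rewrite subr0 ge_max lexx (ltW beta0) le_max lexx orbT.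
have hbother : forall i j, i <> j -> b j (xs i) = 0.
  move=> i j hij; have [h1 h2] := hxs i j hij.
  have : eps <= d j (xs i) by rewrite /d le_min h1 h2.
  move=> hdj; apply/le_anti; rewrite /b ge_max lexx /= le_max lexx /=.
  lra.
have hblip : forall i u v, b i u <= b i v + p (u - v).
  move=> i u v.
  have hdl : d i v <= d i u + p (u - v).
    rewrite /d -lerBlDr le_min !lerBlDr !ge_min; apply/andP; split; apply/orP; [left|right].
      by have := pv_tri hv v u (xs i); rewrite (pv_sym hv v u); lra.
    by have := pv_tri hv v u (- xs i); rewrite !opprK (pv_sym hv v u); lra.
  rewrite {1}/b ge_max; apply/andP; split.
    by have := hb0 i v; have := hge0 (u - v); lra.
  have : beta - d i v <= b i v by rewrite /b le_max lexx orbT.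
  lra.
have hbeven : forall i x, b i (- x) = b i x.
  move=> i x; rewrite /b /d.
  have -> : - x - xs i = - (x + xs i) by rewrite opprD.
  rewrite pv_N // minC.
  have -> : - x + xs i = - (x - xs i) by rewrite opprB addrC.
  by rewrite pv_N.
pose g (S : nat -> Prop) (x : G) := gsup S (fun i => b i x).
have g0 : forall S x, 0 <= g S x.
  by move=> S x; apply: (@gsup_ge0 _ _ _ beta) => //; apply: ltW.
have gB : forall S x, g S x <= beta.
  by move=> S x; apply: gsup_le => [|i _]; [apply: ltW | apply: hbB].
have gmem : forall S x i, S i -> b i x <= g S x.
  by move=> S x i Si; apply: (@gsup_ub _ _ _ beta) => //; apply: ltW.
have glip : forall S u v, g S u <= g S v + p (u - v).
  move=> S u v; apply: gsup_le => [|i Si].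
    by have := g0 S v; have := hge0 (u - v); lra.
  by have := hblip i u v; have := gmem S v i Si; lra.
have geven : forall S x, g S (- x) = g S x.
  move=> S x; rewrite /g; congr gsup; apply: funext => i; exact: hbeven.
have gzero : forall S i, ~ S i -> g S (xs i) = 0.
  move=> S i hSi; apply/le_anti; rewrite g0 andbT; apply: gsup_le => // j Sj.
  rewrite hbother //; move=> hij; apply: hSi; by rewrite hij.
pose e (m : nat) : R := (m.+1%:R)^-1.
have exk : forall nm : nat * nat, exists y, K y /\
    ((exists k, K k /\ p (k - s nm.1) < e nm.2) -> p (y - s nm.1) < e nm.2).
  move=> [n m].
  case: (pselect (exists k, K k /\ p (k - s n) < e m)) => [[k [Kk hk]]|hnk].
    by exists k.
  by exists 0; split => // hh; exfalso; apply: hnk.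
have [kk hkk] := choice exk.
pose q (S : nat -> Prop) (z : G * 'Z_N) :=
  if z.2 == 0 then p z.1 else c + g S z.1.
have hNpos : forall n : nat, (0 < n)%N -> 0 < (n%:R : R)^-1.
  by move=> n hnn; rewrite invr_gt0 ltr0n.
have hq : forall S, in_frakG r N (fun z : G * 'Z_N => K z.1) (q S).
  move=> S; split.
  - by split => // -[x a] [y b'] /= Kx Ky; apply: KB.
  - split.
    + move=> [x a] _; rewrite /q /=; case: eqP => _; first exact: hge0.
      by have := g0 S x; lra.
    + move=> [x a] /= Kx; rewrite /q /=; case: eqP => [->|ha]; split.
      * by case: hv => _ hz _ _ /(proj1 (hz x Logic.I)) ->.
      * by case => ->; rewrite pv_0.
      * by move=> h; exfalso; have := g0 S x; lra.
      * by move=> h; exfalso; apply: ha; case: h.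
    + move=> [x a] /= Kx; rewrite /q /= oppr_eq0; case: eqP => _.
        exact: pv_N.
      by rewrite geven.
    + move=> [x a] [y b'] /= Kx Ky; rewrite /q /=.
      case: (eqVneq a 0) => [->|ha]; case: (eqVneq b' 0) => [->|hb].
      * by rewrite add0r ?eqxx; apply: pv_D.
      * rewrite add0r ?(negbTE hb) ?eqxx.
        by have := glip S (x + y) y; rewrite addrK; lra.
      * rewrite addr0 ?(negbTE ha) ?eqxx.
        have := glip S (x + y) x; rewrite (addrC x y) addrK; lra.
      * rewrite ?(negbTE ha) ?(negbTE hb); case: eqP => _.
          by have := cK (x + y) (KD x y Kx Ky); have := g0 S x; have := g0 S y; lra.
        by have := gB S (x + y); have := g0 S x; have := g0 S y; lra.
  - exists (fun n => match @unpickle (nat * nat * 'Z_N)%type n with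
                 | Some (nm, a) => (kk nm, a) | None => 0 end).
    split.
      by move=> n /=; case: unpickle => [[nm a]|] //=; apply: (hkk nm).1.
    move=> [x a] /= Kx eps' eps'0.
    have [k hk] := arch_inv (divr_gt0 eps'0 (ltr0n R 2)).
    have [n hsn] := hs x Logic.I (e k) (inv_pos _ k).
    exists (pickle ((n, k), a)); rewrite pickleK /q /= subrr eqxx /=.
    have h1 := (hkk (n, k)).2 (ex_intro _ x (conj Kx hsn)).
    have := pv_tri hv x (s n) (kk (n, k)); rewrite (pv_sym hv (s n)) /=.
    rewrite -/(e k) in hk h1; lra.
  - move=> [x a] /= Kx eps' eps'0.
    have pmn : forall n, (x, a) *+ n = (x *+ n, a *+ n).
      by elim=> [|n IH] //; rewrite !mulrS IH.
    have [n0 hn0] := hO0 x Logic.I (eps' / 2) (divr_gt0 eps'0 (ltr0n R 2)).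
    have t0 : 0 < eps' / (2 * (c + c)).
      by rewrite divr_gt0 // mulr_gt0 // ?ltr0n //; lra.
    have [k hk] := arch_inv t0.
    exists (maxn n0 k.+1) => n; rewrite geq_max => /andP [hn0n hkn].
    have npos : (0 < n)%N by apply: leq_trans hkn.
    have u0 := hNpos n npos.
    have hu : (n%:R : R)^-1 <= (k.+1%:R)^-1.
      by rewrite lef_pV2 ?posrE ?ltr0n // ler_nat.
    have hqn : q S ((x, a) *+ n) <= p (x *+ n) + (c + c).
      rewrite pmn /q /=; case: eqP => _; first by lra.
      by have := gB S (x *+ n); have := hge0 (x *+ n); lra.
    have hqge : 0 <= q S ((x, a) *+ n).
      rewrite /q; case: eqP => _; first exact: hge0.
      by have := g0 S ((x, a) *+ n).1; lra.
    have := hn0 n hn0n; rewrite !subr0 !ger0_norm; last first.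
      - by apply: divr_ge0; [exact: hge0 | exact: ler0n].
      - by apply: divr_ge0 => //; exact: ler0n.
    move=> hp.
    have h1 : q S ((x, a) *+ n) / n%:R <= (p (x *+ n) + (c + c)) / n%:R.
      by apply: ler_wpM2r => //; apply: ltW.
    have h2 : (c + c) * (n%:R)^-1 <= (c + c) * (eps' / (2 * (c + c))).
      apply: ler_wpM2l; first by lra.
      by apply: ltW; apply: le_lt_trans hk.
    have h3 : (c + c) * (eps' / (2 * (c + c))) = eps' / 2.
      have hcc : c + c != 0 by apply: lt0r_neq0; lra.
      by field; rewrite ?mulf_neq0 ?hcc ?pnatr_eq0.
    rewrite mulrDl in h1; lra.
  - split.
      case: (r) hbd c1 => //= hbd1 c1' [x a] /= Kx; rewrite /q.
      case: eqP => _; first exact: hbd1.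
      by have := gB S x; have := c1' erefl; lra.
    move=> hN0' [x a] /= Kx.
    have pmn : forall n, (x, a) *+ n = (x *+ n, a *+ n).
      by elim=> [|n IH] //; rewrite !mulrS IH.
    rewrite pmn (hexp hN0' x Logic.I) -mulr_natr pchar_Zp ?mulr0 //.
    exact: gt1.
have hY : forall S : nat -> Prop, exists y, forall x, K x -> p (x + y) = c + g S x.
  move=> S.
  have hq0 : forall x, K x -> q S (x, 0) = p x by move=> x _; rewrite /q /= ?eqxx.
  have [psi [hadd hiso h0]] := hyp _ (q S) (hq S) hq0.
  exists (psi (0, 1)) => x Kx.
  have := hiso (x, 1) Kx; rewrite /q /= => <-.
  rewrite -{1}(h0 x Kx) -hadd //.
  have -> : ((x, 0) + (0, 1) : G * 'Z_N) = (x + 0, 0 + 1) by [].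
  by rewrite addr0 add0r.
have [Y hYp] := choice hY.
have exio : forall S : nat -> Prop, exists n, p (Y S - s n) < beta / 2.
  by move=> S; apply: hs => //; apply: divr_gt0 => //; rewrite ltr0n.
have [io hio] := choice exio.
have inj : forall S S', io S = io S' -> forall i, S i -> S' i.
  move=> S S' heq i Si; case: (pselect (S' i)) => // hnS; exfalso.
  have h1 := hYp S (xs i) (Kxs i); have h2 := hYp S' (xs i) (Kxs i).
  rewrite gzero // in h2.
  have h3 := gmem S (xs i) i Si; rewrite hbself in h3.
  have h4 : p (xs i + Y S) <= p (xs i + Y S') + p (Y S - Y S').
    have -> : xs i + Y S = (xs i + Y S') + (Y S - Y S') by rewrite addrCA addrK addrC.
    exact: pv_D.
  have h5 := pv_tri hv (Y S) (s (io S)) (Y S').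
  rewrite (pv_sym hv (s (io S)) (Y S')) heq in h5.
  move: (hio S) (hio S'); rewrite heq; lra.
pose D := fun k => exists S, io S = k /\ ~ S k.
have injD : forall S, io S = io D -> S = D.
  move=> S hS; apply: funext => i; apply: propext; split; apply: inj => //.
case: (pselect (D (io D))) => [hD|hnD].
  have [S [hS hnS]] := hD; rewrite (injD S hS) in hnS; exact: hnS hD.
apply: (hnD); exists D; split => //; exact: hnD.
Qed.
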